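(* There is an absolute constant $C$ such that the following holds for every integer $K\ge2$. Let $\mathcal{Z}=\{z_0,\dots,z_K\}$ with $z_0=\sin^2\frac{\pi}{4K}$, $z_i=\sin^2\frac{\pi i}{2K}$ for $1\le i\le K-1$, and $z_K=\cos^2\frac{\pi}{4K}$. Let $p\in[0,1]$ and let $p^-,p^+$ be neighbouring points of $\mathcal{Z}$ (i.e. $p^-=z_i$, $p^+=z_{i+1}$ for some $i$) with $p^-\le p<p^+$. Let $q$ be the random variable taking value $p^-$ with probability proportional to $\frac{p^+-p}{p^+(1-p^+)}$ and value $p^+$ with probability proportional to $\frac{p-p^-}{p^-(1-p^-)}$. Then for all $y\in\{0,1\}$, $\mathbb{E}[\ell(q,y)]-\ell(p,y)\le \frac{C}{K^2}$, where $\ell$ is the log loss.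
   Context: Log loss: $\ell(p,y)=-y\log p-(1-y)\log(1-p)$. *)

(* Defs.v *)
From Stdlib Require Import Reals Lra Lia.
Open Scope R_scope.

Definition logloss (p y : R) : R := - y * ln p - (1 - y) * ln (1 - p).

Definition zgrid (K i : nat) : R :=
  if Nat.eqb i 0 then (sin (PI / (4 * INR K))) ^ 2
  else if Nat.eqb i K then (cos (PI / (4 * INR K))) ^ 2
  else (sin (PI * INR i / (2 * INR K))) ^ 2.

Definition w_minus (pm pp p : R) : R := (pp - p) / (pp * (1 - pp)).
Definition w_plus  (pm pp p : R) : R := (p - pm) / (pm * (1 - pm)).

Definition prob_minus (pm pp p : R) : R :=
  w_minus pm pp p / (w_minus pm pp p + w_plus pm pp p).
Definition prob_plus (pm pp p : R) : R :=
  w_plus pm pp p / (w_minus pm pp p + w_plus pm pp p).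

Definition expected_loss_q (pm pp p y : R) : R :=
  prob_minus pm pp p * logloss pm y + prob_plus pm pp p * logloss pp y.

(* Main.v *)
Require Import Defs.
From Stdlib Require Import Reals Lra Lia.
Open Scope R_scope.

Lemma ln_bound x y : 0 < x -> 0 < y -> ln x - ln y <= (x - y) / y.
Proof.
  intros hx hy.
  pose proof (exp_ineq1_le (ln (x / y))) as H.
  rewrite exp_ln in H by (apply Rdiv_lt_0_compat; lra).
  unfold Rdiv in H. rewrite ln_mult in H by (try apply Rinv_0_lt_compat; lra).
  rewrite ln_Rinv in H by lra. unfold Rdiv.
  replace ((x - y) * / y) with (x * / y - 1) by (field; lra). lra.
Qed.

Lemma key pm pp p y : 0 < pm -> pm <= p -> p < pp -> pp < 1 -> (y = 0 \/ y = 1) ->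
  expected_loss_q pm pp p y - logloss p y <= (pp - pm)^2 / (pm * (1 - pm)).
Proof.
  intros h0 h1 h2 h3 hy.
  set (u := pp - p). set (v := p - pm). set (d := pp - pm).
  set (A := pp * (1 - pp)). set (B := pm * (1 - pm)).
  assert (hA : 0 < A) by (unfold A; apply Rmult_lt_0_compat; lra).
  assert (hB : 0 < B) by (unfold B; apply Rmult_lt_0_compat; lra).
  assert (hu : 0 < u) by (unfold u; lra).
  assert (hv : 0 <= v) by (unfold v; lra).
  assert (hW : 0 < u * B + v * A) by nra.
  unfold expected_loss_q, prob_minus, prob_plus, w_minus, w_plus.
  fold u v A B.
  set (a := u / A / (u / A + v / B)). set (b := v / B / (u / A + v / B)).
  assert (hAi : 0 < / A) by (apply Rinv_0_lt_compat; lra).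
  assert (hBi : 0 < / B) by (apply Rinv_0_lt_compat; lra).
  assert (hWp : 0 < u / A + v / B) by (unfold Rdiv; nra).
  assert (hWi : 0 < / (u / A + v / B)) by (apply Rinv_0_lt_compat; lra).
  assert (ha : 0 <= a) by (unfold a, Rdiv; apply Rmult_le_pos; nra).
  assert (hb : 0 <= b) by (unfold b, Rdiv; apply Rmult_le_pos; nra).
  assert (hab : a + b = 1) by (unfold a, b; field; lra).
  assert (hfin : 0 <= d * (d * (u * B + v * A) - u * v * B)).
  { assert (Hd : d = u + v) by (unfold d, u, v; ring).
    assert (E : d * (u * B + v * A) - u * v * B = u * u * B + v * (u + v) * A) by (rewrite Hd; ring).
    rewrite E. apply Rmult_le_pos; [lra|].
    apply Rplus_le_le_0_compat; apply Rmult_le_pos; try lra; apply Rmult_le_pos; lra. }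
  assert (hbnd : d^2 / B - u * v * d / (u * B + v * A)
      = d * (d * (u * B + v * A) - u * v * B) / (B * (u * B + v * A))) by (field; lra).
  assert (hpos : 0 <= d * (d * (u * B + v * A) - u * v * B) / (B * (u * B + v * A))).
  { apply Rmult_le_pos; [lra|]. apply Rlt_le, Rinv_0_lt_compat. nra. }
  destruct hy as [-> | ->]; unfold logloss.
  - assert (l1 : ln (1 - p) - ln (1 - pm) <= - v / (1 - pm)).
    { replace (- v / (1 - pm)) with (((1-p) - (1-pm))/(1-pm)) by (unfold v; field; lra).
      apply ln_bound; lra. }
    assert (l2 : ln (1 - p) - ln (1 - pp) <= u / (1 - pp)).
    { replace (u / (1 - pp)) with (((1-p) - (1-pp))/(1-pp)) by (unfold u; field; lra).
      apply ln_bound; lra. }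
    assert (E : a * (- v / (1 - pm)) + b * (u / (1 - pp)) = u * v * d / (u * B + v * A)).
    { unfold a, b, A, B, d, u, v in *. field. repeat split; try lra. }
    assert (a * (ln (1 - p) - ln (1 - pm)) + b * (ln (1 - p) - ln (1 - pp))
       <= a * (- v / (1 - pm)) + b * (u / (1 - pp))).
    { apply Rplus_le_compat; apply Rmult_le_compat_l; lra. }
    fold d B. 
    match goal with |- ?L <= _ => replace L
      with (a * (ln (1 - p) - ln (1 - pm)) + b * (ln (1 - p) - ln (1 - pp)))
      by (replace b with (1 - a) by lra; ring) end.
    lra.
  - assert (l1 : ln p - ln pm <= v / pm) by (apply ln_bound; lra).
    assert (l2 : ln p - ln pp <= - u / pp).
    { replace (- u / pp) with ((p - pp)/pp) by (unfold u; field; lra).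
      apply ln_bound; lra. }
    assert (E : a * (v / pm) + b * (- u / pp) = u * v * d / (u * B + v * A)).
    { unfold a, b, A, B, d, u, v in *. field. repeat split; try lra. }
    assert (a * (ln p - ln pm) + b * (ln p - ln pp)
       <= a * (v / pm) + b * (- u / pp)).
    { apply Rplus_le_compat; apply Rmult_le_compat_l; lra. }
    fold d B.
    match goal with |- ?L <= _ => replace L
      with (a * (ln p - ln pm) + b * (ln p - ln pp))
      by (replace b with (1 - a) by lra; ring) end.
    lra.
Qed.
Lemma sin_add_le x t : 0 <= x -> x <= PI -> 0 <= t -> t <= PI -> sin (x + t) <= sin x + t.
Proof.
  intros. rewrite sin_plus.
  pose proof (sin_ge_0 x H H0). pose proof (sin_ge_0 t H1 H2).
  pose proof (COS_bound t). pose proof (COS_bound x).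
  assert (sin t <= t).
  { destruct (Req_dec t 0) as [->|]; [rewrite sin_0; lra|]. left; apply sin_lt_x; lra. }
  nra.
Qed.

Lemma sin_lb3 a : 0 <= a -> a <= 2 -> a / 3 <= sin a.
Proof.
  intros. pose proof PI_RGT_0. assert (a <= PI) by (pose proof PI2_1; lra).
  destruct (sin_bound a 0 H H2) as [H3 _].
  unfold sin_approx, sin_term in H3. simpl in H3.
  replace (1 * (a * 1) / 1 + -1 * 1 * (a * (a * (a * 1))) / ((1 + 1) * (1 + (1 + 1)))) with (a - a^3/6) in H3 by field.
  assert (a/3 <= a - a^3/6) by nra. nra.
Qed.

Lemma trig_bound a b h : 0 < h -> h / 2 <= a -> a <= b -> b <= PI / 2 -> b - a <= h -> a <= 2 ->
  (sin b ^ 2 - sin a ^ 2) ^ 2 <= 128 * h ^ 2 * (sin a ^ 2 * (1 - sin a ^ 2)).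
Proof.
  intros hh h1 h2 h3 h4 h5. pose proof PI_RGT_0.
  assert (sb : sin b <= sin a + h).
  { replace b with (a + (b - a)) by ring. pose proof (sin_add_le a (b - a)). lra. }
  assert (cb : cos a <= cos b + h).
  { rewrite <- !sin_shift. replace (PI/2 - a) with ((PI/2 - b) + (b - a)) by ring.
    pose proof (sin_add_le (PI/2 - b) (b - a)). lra. }
  assert (sab : sin a <= sin b) by (apply sin_incr_1; lra).
  assert (cab : cos b <= cos a) by (apply cos_decr_1; lra).
  assert (sa0 : h / 6 <= sin a) by (pose proof (sin_lb3 a); lra).
  assert (cb0 : 0 <= cos b) by (apply cos_ge_0; lra).
  pose proof (sin2_cos2 a) as Ea. pose proof (sin2_cos2 b) as Eb. unfold Rsqr in *.
  set (sa := sin a) in *. set (sb' := sin b) in *. set (ca := cos a) in *. set (cb' := cos b) in *.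
  assert (d1 : sb' ^ 2 - sa ^ 2 <= h * (2 * sa + h)) by nra.
  assert (d2 : sb' ^ 2 - sa ^ 2 <= h * (2 * ca)) by nra.
  assert (d0 : 0 <= sb' ^ 2 - sa ^ 2) by nra.
  replace (1 - sa ^ 2) with (ca ^ 2) by nra.
  destruct (Rle_dec ca sa).
  - assert (sa * sa >= 1/2) by nra.
    assert ((sb' ^ 2 - sa ^ 2) ^ 2 <= (h * (2 * ca)) ^ 2) by (apply pow_incr; lra).
    nra.
  - assert (ca * ca >= 1/2) by nra.
    assert ((sb' ^ 2 - sa ^ 2) ^ 2 <= (h * (2 * sa + h)) ^ 2) by (apply pow_incr; lra).
    assert (h * (2 * sa + h) <= 8 * h * sa) by nra.
    assert ((h * (2 * sa + h))^2 <= (8 * h * sa) ^ 2) by (apply pow_incr; nra).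
    nra.
Qed.
Definition alpha (K j : nat) : R :=
  let h := PI / (2 * INR K) in
  if Nat.eqb j 0 then h / 2 else if Nat.eqb j K then PI / 2 - h / 2 else INR j * h.

Lemma zgrid_alpha K j : (2 <= K)%nat -> zgrid K j = sin (alpha K j) ^ 2.
Proof.
  intros HK. assert (0 < INR K) by (apply lt_0_INR; lia).
  unfold zgrid, alpha.
  destruct (Nat.eqb j 0).
  - f_equal. f_equal. field. lra.
  - destruct (Nat.eqb j K).
    + rewrite sin_shift. f_equal. f_equal. field. lra.
    + f_equal. f_equal. field. lra.
Qed.

Lemma alpha_props K i : (2 <= K)%nat -> (i < K)%nat ->
  let h := PI / (2 * INR K) in
  h / 2 <= alpha K i /\ alpha K i <= alpha K (S i) /\ alpha K (S i) <= PI / 2 - h / 2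
  /\ alpha K (S i) - alpha K i <= h /\ alpha K i <= 2.
Proof.
  intros HK Hi h. pose proof PI_RGT_0. pose proof PI2_1. pose proof PI_4.
  assert (HKr : 2 <= INR K) by (replace 2 with (INR 2) by (simpl; ring); apply le_INR; lia).
  assert (hKh : INR K * h = PI / 2) by (unfold h; field; lra).
  assert (h0 : 0 < h) by (unfold h; apply Rdiv_lt_0_compat; lra).
  assert (hle : h <= PI / 4).
  { unfold h. apply Rmult_le_reg_r with (4 * INR K). lra. field_simplify; [nra|lra]. }
  unfold alpha. fold h.
  destruct (Nat.eqb_spec i 0) as [e0|n0]; destruct (Nat.eqb_spec (S i) 0) as [e|n1]; try lia;
  destruct (Nat.eqb_spec (S i) K) as [e2|n2]; try (subst; lia).
  - subst i. change (INR 1) with 1. lra.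
  - destruct (Nat.eqb_spec i K) as [|_]; [lia|].
    assert (Ei : INR i = INR K - 1) by (rewrite <- e2, S_INR; ring).
    assert (1 <= INR i) by (replace 1 with (INR 1) by reflexivity; apply le_INR; lia).
    rewrite Ei. nra.
  - destruct (Nat.eqb_spec i K) as [|_]; [lia|].
    assert (1 <= INR i) by (replace 1 with (INR 1) by reflexivity; apply le_INR; lia).
    assert (INR (S i) <= INR K - 1).
    { replace (INR K - 1) with (INR (K - 1)). apply le_INR; lia.
      rewrite minus_INR by lia. reflexivity. }
    rewrite S_INR in *. nra.
Qed.

Theorem lemma5 :
  exists C : R,
    forall (K : nat), (2 <= K)%nat ->
    forall (p : R), 0 <= p <= 1 ->
    forall (i : nat), (i < K)%nat ->
      zgrid K i <= p < zgrid K (S i) ->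
      forall y : R, (y = 0 \/ y = 1) ->
        expected_loss_q (zgrid K i) (zgrid K (S i)) p y - logloss p y
          <= C / (INR K) ^ 2.
Proof.
  exists 512. intros K HK p Hp i Hi Hz y Hy.
  pose proof PI_RGT_0. pose proof PI2_1. pose proof PI_4.
  assert (HKr : 2 <= INR K) by (replace 2 with (INR 2) by (simpl; ring); apply le_INR; lia).
  destruct (alpha_props K i HK Hi) as (a1 & a2 & a3 & a4 & a5).
  set (h := PI / (2 * INR K)) in *.
  assert (h0 : 0 < h) by (unfold h; apply Rdiv_lt_0_compat; lra).
  rewrite !zgrid_alpha in * by exact HK.
  set (a := alpha K i) in *. set (b := alpha K (S i)) in *.
  assert (sa : 0 < sin a) by (apply sin_gt_0; lra).
  assert (sb1 : sin b < 1).
  { rewrite <- sin_PI2. apply sin_increasing_1; lra. }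
  assert (sb0 : 0 <= sin b) by (apply sin_ge_0; lra).
  assert (Hpm : 0 < sin a ^ 2) by nra.
  assert (Hpp : sin b ^ 2 < 1) by nra.
  assert (HB : 0 < sin a ^ 2 * (1 - sin a ^ 2)) by (apply Rmult_lt_0_compat; lra).
  eapply Rle_trans. apply key; lra.
  pose proof (trig_bound a b h h0 a1 a2 ltac:(lra) a4 a5) as T.
  apply Rle_trans with (128 * h ^ 2).
  { apply Rmult_le_reg_r with (sin a ^ 2 * (1 - sin a ^ 2)); [exact HB|].
    unfold Rdiv. rewrite Rmult_assoc, Rinv_l by lra. lra. }
  unfold h. apply Rmult_le_reg_r with (INR K ^ 2). nra.
  field_simplify; [|lra|lra]. nra.
Qed.
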